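(* Let $p\in\mathbb{T}^{\mathcal{P}([n])}$ be a tropical Wick vector with nonempty support, and let $M$ be the even $\Delta$-matroid whose collection of bases is $\operatorname{supp}(p)$. Then: (i) if $x\in\mathcal{C}(p)^\top$ has nonempty support, then $\operatorname{supp}(x)$ is a dependent subset in $M^*$; (ii) the cocycles of $p$ having minimal nonempty support (with respect to inclusion) are exactly the cocircuits of $p$; (iii) for any two cocircuits $c^*_1,c^*_2$ of $p$ with the same support there is $\lambda\in\mathbb{R}$ with $c^*_1=c^*_2+\lambda\mathbf{1}$.
   Context: $\mathbb{T}=\mathbb{R}\cup\{\infty\}$; $\mathcal{P}([n])$ the set of subsets of $[n]$. A tropical Wick vector is $p\in\mathbb{T}^{\mathcal{P}([n])}$ such that for all $S,T\subseteq[n]$ the minimum $\min_{i\in S\Delta T}(p_{S\Delta\{i\}}+p_{T\Delta\{i\}})$ is attained at least twice or equals $\infty$; $\operatorname{supp}(p)=\{S:p_S\ne\infty\}$, which (when nonempty) is the set of bases of an even $\Delta$-matroid $M$ on $[n]$. The dual $M^*$ has bases $\{[n]\setminus B: B \text{ a basis of } M\}$. Let $\mathcal{J}=\{1,\dots,n,1^*,\dots,n^*\}$ with involution $i\leftrightarrow i^*$ ($i^{**}=i$); $X\subseteq\mathcal{J}$ is admissible if $X\cap X^*=\emptyset$. For $S\subseteq[n]$ let $\bar S=S\cup\{i^*:i\in[n]\setminus S\}$, and $\bar p_{\bar S}:=p_S$. A subset $X\subseteq\mathcal{J}$ is dependent in $M^*$ if it is not contained in $\bar B$ for any basis $B$ of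 $M^*$. For $T\subseteq[n]$ define $c_T, c^*_T\in\mathbb{T}^{\mathcal{J}}$ by $(c_T)_i=\bar p_{\bar T\Delta\{i,i^*\}}$ if $i\in\bar T$, $\infty$ otherwise; $(c^*_T)_i=\bar p_{\bar T\Delta\{i,i^*\}}$ if $i\notin\bar T$, $\infty$ otherwise. Circuits of $p$: vectors $c_T+\lambda\mathbf{1}$, $\lambda\in\mathbb{R}$, with nonempty support; $\mathcal{C}(p)$ is the set of circuits. Cocircuits of $p$: vectors $c^*_T+\lambda\mathbf{1}$ with nonempty support. Here the support of a vector in $\mathbb{T}^{\mathcal{J}}$ is the set of coordinates $\neq\infty$. $x,y$ are tropically orthogonal if $\min_k(x_k+y_k)$ is attained at least twice or equals $\infty$; $\mathcal{C}(p)^\top$ is the set of vectors tropically orthogonal to all circuits. A vector is admissible if its support is admissible; a cocycle of $p$ is an admissible vector in $\mathcal{C}(p)^\top$. *)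

(* Defs.v *)
From HB Require Import structures.
From mathcomp Require Import all_boot all_order all_algebra.
From mathcomp Require Import reals.
Set Implicit Arguments. Unset Strict Implicit. Unset Printing Implicit Defensive.
Import Order.TTheory GRing.Theory Num.Theory.
Local Open Scope ring_scope.

(* Tropical numbers T = R ∪ {∞}: [Some a] is the real a, [None] is ∞. *)
Definition trop (R : realType) := option R.

(* tropical product (= ordinary sum, ∞ absorbing) *)
Definition tadd (R : realType) (a b : trop R) : trop R :=
  match a, b with Some x, Some y => Some (x + y) | _, _ => None end.

Definition min_twice_or_inf (R : realType) (I : finType) (P : pred I)
    (f : I -> trop R) : Prop :=
  (forall i, P i -> f i = None) \/
  exists i j (m : R), [/\ i != j, P i & P j] /\ f i = Some m /\ f j = Some m /\
    forall k, P k -> match f k with Some a => m <= a | None => true end.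

Definition symd (T : finType) (A B : {set T}) : {set T} := (A :\: B) :|: (B :\: A).

Definition wick (R : realType) (n : nat) (p : {ffun {set 'I_n} -> trop R}) : Prop :=
  forall A B : {set 'I_n},
    min_twice_or_inf (fun i => i \in symd A B)
      (fun i => tadd (p (symd A [set i])) (p (symd B [set i]))).

Definition supp_p (R : realType) (n : nat) (p : {ffun {set 'I_n} -> trop R}) :
  {set {set 'I_n}} := [set A | p A != None].

(* J = {1..n, 1*..n*}: [inl i] is i, [inr i] is i*. *)
Definition J (n : nat) : finType := ('I_n + 'I_n)%type.
Definition star (n : nat) (j : J n) : J n :=
  match j with inl i => inr i | inr i => inl i end.
Definition base (n : nat) (j : J n) : 'I_n := match j with inl i | inr i => i end.

Definition admissible (n : nat) (X : {set J n}) : Prop :=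
  forall j, j \in X -> star j \notin X.

Definition bar (n : nat) (A : {set 'I_n}) : {set J n} :=
  [set j : J n | match j with inl i => i \in A | inr i => i \notin A end].

(* bar p_{bar S} := p_S (and ∞ on subsets of J not of the form bar S,
   which never occur below) *)
Definition barp (R : realType) (n : nat) (p : {ffun {set 'I_n} -> trop R})
    (X : {set J n}) : trop R :=
  match [pick A | X == bar A] with Some A => p A | None => None end.

Definition tvec (R : realType) (n : nat) := {ffun J n -> trop R}.

Definition tsupp (R : realType) (n : nat) (x : tvec R n) : {set J n} :=
  [set j | x j != None].

Definition shift (R : realType) (n : nat) (x : tvec R n) (l : R) : tvec R n :=
  [ffun j => tadd (x j) (Some l)].

Definition cT (R : realType) (n : nat) (p : {ffun {set 'I_n} -> trop R})
    (A : {set 'I_n}) : tvec R n :=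
  [ffun j => if j \in bar A then barp p (symd (bar A) [set j; star j]) else None].

Definition cTstar (R : realType) (n : nat) (p : {ffun {set 'I_n} -> trop R})
    (A : {set 'I_n}) : tvec R n :=
  [ffun j => if j \notin bar A then barp p (symd (bar A) [set j; star j]) else None].

Definition circuit (R : realType) (n : nat) (p : {ffun {set 'I_n} -> trop R})
    (x : tvec R n) : Prop :=
  (exists (A : {set 'I_n}) (l : R), x = shift (cT p A) l) /\ tsupp x != set0.

Definition cocircuit (R : realType) (n : nat) (p : {ffun {set 'I_n} -> trop R})
    (x : tvec R n) : Prop :=
  (exists (A : {set 'I_n}) (l : R), x = shift (cTstar p A) l) /\ tsupp x != set0.

Definition torth (R : realType) (n : nat) (x y : tvec R n) : Prop :=
  min_twice_or_inf predT (fun k => tadd (x k) (y k)).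

Definition in_Cperp (R : realType) (n : nat) (p : {ffun {set 'I_n} -> trop R})
    (x : tvec R n) : Prop :=
  forall c, circuit p c -> torth x c.

Definition cocycle (R : realType) (n : nat) (p : {ffun {set 'I_n} -> trop R})
    (x : tvec R n) : Prop :=
  admissible (tsupp x) /\ in_Cperp p x.

(* X ⊆ J is dependent in M^*, where the bases of M are supp p and the bases of
   M^* are the complements [n] \ B of bases B of M *)
Definition dependent_dual (R : realType) (n : nat) (p : {ffun {set 'I_n} -> trop R})
    (X : {set J n}) : Prop :=
  forall B : {set 'I_n}, B \in supp_p p -> ~ (X \subset bar (~: B)).

(* Main.v *)
Require Import Defs.
From HB Require Import structures.
From mathcomp Require Import all_boot all_order all_algebra.
From mathcomp Require Import reals.
From mathcomp Require Import lra.
Local Open Scope ring_scope.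
Set Implicit Arguments. Unset Strict Implicit. Unset Printing Implicit Defensive.
Import Order.TTheory GRing.Theory Num.Theory.

Definition fl (n : nat) (A : {set 'I_n}) (i : 'I_n) := symd A [set i].

Lemma in_symd (T : finType) (A B : {set T}) x :
  (x \in symd A B) = (x \in A) (+) (x \in B).
Proof. by rewrite /symd !inE; case: (x \in A); case: (x \in B). Qed.

Lemma in_fl n (A : {set 'I_n}) i k : (k \in fl A i) = (k \in A) (+) (k == i).
Proof. by rewrite /fl in_symd inE. Qed.

Lemma flK n (A : {set 'I_n}) i : fl (fl A i) i = A.
Proof. apply/setP=> k; rewrite !in_fl; by case: (k \in A); case: (k == i). Qed.

Lemma flC n (A : {set 'I_n}) i k : fl (fl A i) k = fl (fl A k) i.
Proof. apply/setP=> m; rewrite !in_fl; by case: (m \in A); case: (m == i); case: (m==k). Qed.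

Lemma in_bar n (A : {set 'I_n}) j :
  (j \in bar A) = match j with inl i => i \in A | inr i => i \notin A end.
Proof. by rewrite /bar inE. Qed.

Lemma bar_inj n (A B : {set 'I_n}) : bar A = bar B -> A = B.
Proof.
move=> e; apply/setP=> i.
have : (inl i : J n) \in bar A = ((inl i : J n) \in bar B) by rewrite e.
by rewrite !in_bar.
Qed.

Lemma barpE R n (p : {ffun {set 'I_n} -> trop R}) C : barp p (bar C) = p C.
Proof.
rewrite /barp; case: pickP => [A /eqP/bar_inj -> //|].
by move/(_ C); rewrite eqxx.
Qed.

Lemma bar_fl n (A : {set 'I_n}) i k :
  (k \in bar (fl A i)) = if base k == i then k \notin bar A else k \in bar A.
Proof.
by case: k => k; rewrite /= !in_bar in_fl; case: (k \in A); case: (k == i).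
Qed.

Lemma symd_bar n (A : {set 'I_n}) j :
  symd (bar A) [set j; star j] = bar (fl A (base j)).
Proof.
apply/setP=> k; rewrite in_symd bar_fl !inE.
case: j => j; case: k => k /=; rewrite ?in_bar;
  case: (k =P j) => [->|ne]; rewrite ?eqxx ?addbT ?addbF //=;
  try (have -> : (inl k == inl j :> J n) = false by apply/eqP=> -[]);
  try (have -> : (inr k == inr j :> J n) = false by apply/eqP=> -[]);
  try (have -> : (k == j) = false by apply/eqP);
  by rewrite ?addbF.
Qed.

Lemma cTE R n (p : {ffun {set 'I_n} -> trop R}) A j :
  cT p A j = if j \in bar A then p (fl A (base j)) else None.
Proof. by rewrite /cT ffunE symd_bar barpE. Qed.

Lemma cTstarE R n (p : {ffun {set 'I_n} -> trop R}) A j :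
  cTstar p A j = if j \notin bar A then p (fl A (base j)) else None.
Proof. by rewrite /cTstar ffunE symd_bar barpE. Qed.

Lemma notbar_uniq n (A : {set 'I_n}) j k :
  base j = base k -> j \notin bar A -> k \notin bar A -> j = k.
Proof.
case: j => j; case: k => k /= e; subst; rewrite !in_bar ?negbK //;
by case: (_ \in A).
Qed.

Lemma star_neq n (j : J n) : star j != j.
Proof. by case: j. Qed.

Lemma base_star n (j : J n) : base (star j) = base j.
Proof. by case: j. Qed.

Lemma bar_star n (A : {set 'I_n}) j : (star j \in bar A) = (j \notin bar A).
Proof. by case: j => j; rewrite /= !in_bar ?negbK. Qed.

Lemma bar_compl n (A : {set 'I_n}) j : (j \in bar (~: A)) = (j \notin bar A).
Proof. by case: j => j; rewrite !in_bar inE ?negbK. Qed.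

Definition outA n (A : {set 'I_n}) (i : 'I_n) : J n :=
  if i \in A then inr i else inl i.

Lemma outA_base n (A : {set 'I_n}) i : base (outA A i) = i.
Proof. by rewrite /outA; case: (i \in A). Qed.

Lemma outA_notbar n (A : {set 'I_n}) i : outA A i \notin bar A.
Proof. by rewrite /outA; case: ifP => h; rewrite in_bar ?h. Qed.

Lemma notbar_outA n (A : {set 'I_n}) j : j \notin bar A -> j = outA A (base j).
Proof.
move=> h; apply: (@notbar_uniq _ A) => //; rewrite ?outA_base //; exact: outA_notbar.
Qed.

Lemma tsupp_shift R n (v : tvec R n) l : tsupp (shift v l) = tsupp v.
Proof. by apply/setP=> k; rewrite !inE ffunE; case: (v k). Qed.

Lemma in_tsupp R n (v : tvec R n) k : (k \in tsupp v) = (v k != None).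
Proof. by rewrite inE. Qed.

Lemma two_pt R (I : finType) (P : pred I) (f : I -> trop R) j1 j2 :
  j1 != j2 -> P j1 -> P j2 ->
  (forall k, P k -> k != j1 -> k != j2 -> f k = None) ->
  min_twice_or_inf P f -> f j1 = f j2.
Proof.
move=> ne P1 P2 hN [h|[i [j [m [[nij Pi Pj] [fi [fj _]]]]]]].
  by rewrite !h.
have hi : (i == j1) || (i == j2).
  by apply/contraT=> /norP[a b]; move: (hN i Pi a b); rewrite fi.
have hj : (j == j1) || (j == j2).
  by apply/contraT=> /norP[a b]; move: (hN j Pj a b); rewrite fj.
case/orP: hi => /eqP ei; case/orP: hj => /eqP ej; subst;
  by [rewrite eqxx in nij | rewrite fi fj].
Qed.

Lemma transfer R (I K : finType) (P : pred I) (g : I -> trop R) (f : K -> trop R)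
  (phi : I -> K) (psi : K -> I) (c : R) :
  (forall i, P i -> psi (phi i) = i) ->
  (forall i, P i -> f (phi i) = tadd (g i) (Some c)) ->
  (forall k, f k != None -> P (psi k) /\ k = phi (psi k)) ->
  min_twice_or_inf P g -> min_twice_or_inf predT f.
Proof.
move=> hpp hf hk [h|[i [j [m [[nij Pi Pj] [gi [gj hmin]]]]]]].
  left=> k _; case E: (f k) => [a|] //.
  have /hk [Pk ek] : f k != None by rewrite E.
  by move: E; rewrite ek hf // h.
right; exists (phi i), (phi j), (m + c); split; first split => //.
  by apply: contra nij => /eqP e; rewrite -(hpp i Pi) -(hpp j Pj) e.
split; first by rewrite hf // gi.
split; first by rewrite hf // gj.
move=> k _; case E: (f k) => [a|] //.
have /hk [Pk ek] : f k != None by rewrite E.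
move: E; rewrite ek hf //; move: (hmin _ Pk); case: (g (psi k)) => [b|] //= hb [<-].
by rewrite lerD2r.
Qed.

Lemma tadd_None R (a b : trop R) : tadd a b = None -> a = None \/ b = None.
Proof. by case: a; case: b; auto. Qed.

Lemma part_i R n (p : {ffun {set 'I_n} -> trop R}) (x : tvec R n) :
  in_Cperp p x -> tsupp x != set0 -> dependent_dual p (tsupp x).
Proof.
move=> hx /set0Pn [j jX] B hB hsub.
rewrite inE in hB.
have jnB : j \notin bar B by rewrite -bar_compl; apply: (subsetP hsub).
pose A := fl B (base j).
have cj : cT p A j = p B by rewrite cTE bar_fl eqxx jnB /A flK.
have hc : circuit p (shift (cT p A) 0).
  split; first by exists A, 0.
  apply/set0Pn; exists j; rewrite tsupp_shift in_tsupp cj //.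
have ht := hx _ hc; rewrite /torth in ht.
have hall : forall k, k != j -> tadd (x k) (shift (cT p A) 0 k) = None.
  move=> k nkj; case E: (x k) => [a|] //.
  have kX : k \in tsupp x by rewrite in_tsupp E.
  have knB : k \notin bar B by rewrite -bar_compl; apply: (subsetP hsub).
  rewrite ffunE cTE bar_fl; case: eqP => [e|_].
    by move: nkj; rewrite (notbar_uniq e knB jnB) eqxx.
  by rewrite (negbTE knB).
have := two_pt (star_neq j) isT isT (fun k _ a b => hall k b) ht.
rewrite hall ?star_neq // ffunE cj.
move: jX; rewrite in_tsupp; case: (x j) => // a _.
by move: hB; case: (p B).
Qed.

Lemma tadd4 R (a b : trop R) l l' :
  tadd (tadd a (Some l)) (tadd b (Some l')) = tadd (tadd a b) (Some (l + l')).
Proof. by case: a => [a|]; case: b => [b|] //=; rewrite addrACA. Qed.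

Lemma shiftE R n (v : tvec R n) l k : shift v l k = tadd (v k) (Some l).
Proof. by rewrite ffunE. Qed.

Lemma outA_bar n (A B : {set 'I_n}) i :
  (outA A i \in bar B) = (i \in A) (+) (i \in B).
Proof. by rewrite /outA; case: (i \in A); rewrite in_bar //= addbC addbT. Qed.

Lemma cocirc_adm R n (p : {ffun {set 'I_n} -> trop R}) A l :
  admissible (tsupp (shift (cTstar p A) l)).
Proof.
move=> j; rewrite tsupp_shift !in_tsupp !cTstarE bar_star negbK.
by case: (j \in bar A).
Qed.

Lemma cocirc_perp R n (p : {ffun {set 'I_n} -> trop R}) A l :
  wick p -> in_Cperp p (shift (cTstar p A) l).
Proof.
move=> hw c [[B [l' ->]] _]; rewrite /torth.
apply: (@transfer R _ _ (fun i => i \in symd A B)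
  (fun i => tadd (p (symd A [set i])) (p (symd B [set i]))) _ (@outA n A) (@base n) (l + l')).
- by move=> i _; rewrite outA_base.
- move=> i hi /=; rewrite !shiftE cTstarE cTE outA_notbar outA_bar -in_symd hi outA_base.
  exact: tadd4.
- move=> k /=; rewrite !shiftE cTstarE cTE.
  case: ifP => // hA; case: ifP => hB; last by case: (p _).
  have e := notbar_outA hA.
  by split => //; move: hB; rewrite e outA_bar -in_symd outA_base.
- exact: hw.
Qed.

Lemma memX R n (p : {ffun {set 'I_n} -> trop R}) A k :
  (k \in tsupp (cTstar p A)) = (k \notin bar A) && (p (fl A (base k)) != None).
Proof. by rewrite in_tsupp cTstarE; case: ifP. Qed.

Lemma sameAB n (A B : {set 'I_n}) j :
  j \notin bar A -> j \notin bar B -> (base j \in A) = (base j \in B).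
Proof. by case: j => j; rewrite !in_bar ?negbK /=; case: (j \in A); case: (j \in B). Qed.

Lemma part_iii R n (p : {ffun {set 'I_n} -> trop R}) (c1 c2 : tvec R n) :
  wick p -> cocircuit p c1 -> cocircuit p c2 ->
  tsupp c1 = tsupp c2 -> exists l : R, c1 = shift c2 l.
Proof.
move=> hw [[A [l1 ->]] ne1] [[B [l2 ->]] _]; rewrite !tsupp_shift => eX.
rewrite tsupp_shift in ne1; case/set0Pn: ne1 => j0 jA.
have jB := jA; rewrite eX in jB.
move: (jA) (jB); rewrite !memX => /andP [j0A pA0] /andP [j0B pB0].
set i0 := base j0 in pA0 pB0.
case EA: (p (fl A i0)) pA0 => [a0|] // _.
case EB: (p (fl B i0)) pB0 => [b0|] // _.
have key : forall k, k \in tsupp (cTstar p A) ->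
   tadd (p (fl A i0)) (p (fl B (base k))) = tadd (p (fl A (base k))) (p (fl B i0)).
  move=> k kA; have kB := kA; rewrite eX in kB.
  move: (kA) (kB); rewrite !memX => /andP [kA' _] /andP [kB' _].
  case: (base k =P i0) => [-> //|/eqP nk].
  pose C := fl (fl B i0) (base k).
  have hP : forall j, j \notin bar A -> j \notin bar B -> base j != i0 ->
      base j != base k -> (base j \in symd A C) = false.
    move=> j ja jb h1 h2; rewrite in_symd !in_fl (negbTE h1) (negbTE h2) /=.
    by rewrite (sameAB ja jb) !addbF addbb.
  have hw' := hw A C.
  have := @two_pt R _ (fun m => m \in symd A C)
    (fun m => tadd (p (fl A m)) (p (fl C m))) i0 (base k).
  rewrite eq_sym nk /= => /(_ isT).
  have -> : fl C i0 = fl B (base k) by rewrite /C flC flK.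
  have -> : fl C (base k) = fl B i0 by rewrite /C flK.
  move=> h; apply: h.
  - rewrite in_symd !in_fl eqxx eq_sym (negbTE nk) /= /i0 (sameAB j0A j0B).
    by case: (_ \in B).
  - rewrite in_symd !in_fl eqxx (negbTE nk) /= (sameAB kA' kB').
    by case: (_ \in B).
  - move=> m hm m1 m2.
    case E: (p (fl A m)) => [a|] //.
    have mX : outA A m \in tsupp (cTstar p A)
      by rewrite memX outA_notbar outA_base E.
    have mB : outA A m \in tsupp (cTstar p B) by rewrite -eX.
    move: mB; rewrite memX => /andP [mB _].
    have := hP _ (outA_notbar A m) mB; rewrite outA_base => /(_ m1 m2).
    by rewrite hm.
  - exact: hw'.
exists (l1 + a0 - (l2 + b0)); apply/ffunP => k; rewrite !shiftE.
case kX: (k \in tsupp (cTstar p A)).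
  have kB : k \in tsupp (cTstar p B) by rewrite -eX.
  have := key k kX.
  move: (kX) (kB); rewrite !memX => /andP [kA' pa] /andP [kB' pb].
  rewrite !cTstarE kA' kB' EA EB.
  case: (p (fl A (base k))) pa => [ak|] // _.
  case: (p (fl B (base k))) pb => [bk|] // _ /= [h].
  congr Some; lra.
have kB : k \in tsupp (cTstar p B) = false by rewrite -eX.
move: kX kB; rewrite !in_tsupp.
by case: (cTstar p A k); case: (cTstar p B k).
Qed.

Lemma part_ii_fwd R n (p : {ffun {set 'I_n} -> trop R}) (x : tvec R n) :
  wick p -> supp_p p != set0 ->
  cocycle p x -> tsupp x != set0 ->
  (forall y : tvec R n, cocycle p y -> tsupp y != set0 ->
             ~ (tsupp y \proper tsupp x)) -> cocircuit p x.
Proof.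
move=> hw hs [adm hx] ne hmin.
have dep := part_i hx ne.
case/set0Pn: hs => B0 hB0.
case: (@arg_minnP _ B0 (fun B => B \in supp_p p) (fun B => #|tsupp x :&: bar B|) hB0)
  => B hB Bmin.
have : tsupp x :&: bar B != set0.
  apply/negP => /eqP e; apply: (dep B hB); apply/subsetP => j jX.
  rewrite bar_compl; apply/negP => jB.
  have : j \in tsupp x :&: bar B by rewrite in_setI jX jB.
  by rewrite e in_set0.
case/set0Pn => j0; rewrite in_setI => /andP [j0X j0B].
set i := base j0. pose A := fl B i.
have j0A : j0 \notin bar A by rewrite bar_fl eqxx j0B.
have pB : p B != None by move: hB; rewrite inE.
have sub : tsupp (cTstar p A) \subset tsupp x.
  apply/subsetP => k; rewrite memX => /andP [kA pk].
  case: (base k =P i) => [e|/eqP ne_].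
    by rewrite (notbar_uniq e kA j0A).
  apply/contraT => kX.
  set C := fl A (base k).
  have hC : C \in supp_p p by rewrite inE.
  have kB : k \notin bar B by move: kA; rewrite bar_fl (negbTE ne_).
  have := Bmin C hC; rewrite leqNgt => /negP h; exfalso; apply: h.
  have sub2 : tsupp x :&: bar C \subset (tsupp x :&: bar B) :\ j0.
    apply/subsetP => m; rewrite in_setD1 !in_setI => /andP [mX mC].
    move: mC; rewrite /C /A !bar_fl.
    case: (base m =P base k) => [emk|/eqP nmk].
      rewrite emk (negbTE ne_) => mB.
      by move: kX; rewrite -(notbar_uniq emk mB kB) mX.
    case: (base m =P i) => [emi|/eqP nmi] mB.
      have sj : star j0 \notin bar B by rewrite bar_star negbK.
      have ems : m = star j0 by apply: (notbar_uniq _ mB sj); rewrite base_star.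
      by move: (adm _ j0X); rewrite -ems mX.
    rewrite mX mB andbT andbT; apply/eqP => e; move: nmi; by rewrite e eqxx.
  apply: proper_card; apply: (sub_proper_trans sub2); apply: properD1.
  by rewrite in_setI j0X j0B.
have pA0 : p (fl A i) = p B by rewrite /A flK.
have ccirc : cocycle p (shift (cTstar p A) 0).
  by split; [exact: cocirc_adm | exact: cocirc_perp].
have ne0 : tsupp (shift (cTstar p A) 0) != set0.
  by apply/set0Pn; exists j0; rewrite tsupp_shift memX j0A pA0 pB.
have eqX : tsupp (cTstar p A) = tsupp x.
  apply/eqP; rewrite eqEsubset sub /=; apply/negPn/negP => h.
  by apply: (hmin _ ccirc ne0); rewrite tsupp_shift properE sub h.
split; last exact: ne.
move: (j0X); rewrite in_tsupp; case Ex0: (x j0) => [a0|] // _.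
case EpB: (p B) pB => [b0|] // _.
exists A, (a0 - b0); apply/ffunP => k; rewrite shiftE.
case kX: (k \in tsupp x); last first.
  have : k \in tsupp (cTstar p A) = false by rewrite eqX.
  move: kX; rewrite !in_tsupp; by case: (x k); case: (cTstar p A k).
have := kX; rewrite -eqX memX => /andP [kA' pk].
case: (base k =P i) => [e|/eqP nk].
  have ekj := notbar_uniq e kA' j0A; rewrite ekj Ex0 cTstarE j0A pA0 EpB /=.
  congr Some; lra.
pose D := fl B (base k).
have eD : D = fl (fl A i) (base k) by rewrite /A flK.
have eA : A = fl B i by [].
clearbody A.
have cj0 : cT p D j0 = p (fl A (base k)).
  rewrite cTE eD !bar_fl eq_sym (negbTE nk) eqxx j0A.
  by rewrite flC flK.
have ck : cT p D k = p B.
  have kB : k \notin bar B by move: kA'; rewrite eA bar_fl (negbTE nk).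
  by rewrite cTE /D bar_fl eqxx kB flK.
have hc : circuit p (shift (cT p D) 0).
  split; first by exists D, 0.
  by apply/set0Pn; exists j0; rewrite tsupp_shift in_tsupp cj0.
have ht := hx _ hc; rewrite /torth in ht.
have nj0k : j0 != k by apply/eqP => e; move: nk; rewrite -e eqxx.
have hN : forall m, predT m -> m != j0 -> m != k ->
    tadd (x m) (shift (cT p D) 0 m) = None.
  move=> m _ m1 m2.
  case Exm: (x m) => [xm|] //.
  have mX : m \in tsupp x by rewrite in_tsupp Exm.
  move: mX; rewrite -eqX memX => /andP [mA _].
  rewrite shiftE cTE eD !bar_fl.
  case: (base m =P base k) => [emk|/eqP nmk].
    rewrite emk (negbTE nk) mA /=.
    by move: m2; rewrite (notbar_uniq emk mA kA') eqxx.
  case: (base m =P i) => [emi|/eqP nmi].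
    by move: m1; rewrite (notbar_uniq emi mA j0A) eqxx.
  by rewrite (negbTE mA).
have := @two_pt R _ predT (fun m => tadd (x m) (shift (cT p D) 0 m)) j0 k.
move=> /(_ nj0k isT isT hN ht).
rewrite !shiftE cj0 ck Ex0 EpB.
case Exk: (x k) kX => [xk|]; last by rewrite in_tsupp Exk.
move=> _; rewrite cTstarE kA'.
case: (p (fl A (base k))) pk => [ak|] // _ /= [hh].
congr Some; lra.
Qed.

Unset Implicit Arguments.

Theorem proposition6p6 (R : realType) (n : nat) (p : {ffun {set 'I_n} -> trop R}) :
  wick p -> supp_p p != set0 ->
  [/\ (* (i) *)
      (forall x : tvec R n, in_Cperp p x -> tsupp x != set0 ->
         dependent_dual p (tsupp x)),
      (* (ii) *)
      (forall x : tvec R n,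
         (cocycle p x /\ tsupp x != set0 /\
          (forall y : tvec R n, cocycle p y -> tsupp y != set0 ->
             ~ (tsupp y \proper tsupp x)))
         <-> cocircuit p x)
    & (* (iii) *)
      (forall c1 c2 : tvec R n, cocircuit p c1 -> cocircuit p c2 ->
         tsupp c1 = tsupp c2 -> exists l : R, c1 = shift c2 l)].
Proof.
move=> hw hs; split.
- by move=> x; exact: part_i.
- move=> x; split.
    by case=> hc [ne hm]; exact: part_ii_fwd.
  case=> [[A [l ->]] ne]; split.
    by split; [exact: cocirc_adm | exact: cocirc_perp].
  split => // y [_ hyC] ney /properP [sub [j jx jy]].
  move: (jx); rewrite tsupp_shift memX => /andP [jA pj].
  have hB : fl A (base j) \in supp_p p by rewrite inE.
  apply: (part_i hyC ney hB); apply/subsetP => k ky.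
  have := subsetP sub k ky; rewrite tsupp_shift memX => /andP [kA _].
  rewrite bar_compl bar_fl; case: (base k =P base j) => [e|_] //.
  by move: jy; rewrite -(notbar_uniq e kA jA) ky.
- by move=> c1 c2; exact: part_iii.
Qed.
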